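(* Let $\hat{Y}$, $\hat{A}$, $A$ be random variables on a common probability space, where $\hat{Y}$ takes values in a finite set $\mathcal{Y}$ and $A,\hat{A}$ take values in a common finite set $\mathcal{A}$. Identify values with their one-hot vectors, use the $\ell_p$-norm ($p\ge1$) as ground metric, and for pairs use the $\ell_p$-norm of the concatenated one-hot vectors. Then $$I_W(\hat{Y},A)\le I_W(\hat{Y},\hat{A})+2\sqrt[p]{2}\,\mathbb{P}(A\neq\hat{A}).$$
   Context: For random variables $U,V$, the Wasserstein Dependency Measure is $I_W(U,V)=W_1(p(U,V),p(U)p(V))$, where $W_1$ is the 1-Wasserstein distance with respect to the ground metric, $p(U,V)$ the joint law and $p(U)p(V)$ the product of the marginals. Interpretation: $\hat{Y}$ is a predicted label, $A$ a true sensitive attribute, $\hat{A}$ a predicted sensitive attribute. *)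

(* Defs.v *)
From HB Require Import structures.
From mathcomp Require Import all_boot all_order all_algebra.
From mathcomp Require Import all_classical all_reals all_analysis.
Set Implicit Arguments. Unset Strict Implicit. Unset Printing Implicit Defensive.
Import Order.TTheory GRing.Theory Num.Theory.
Local Open Scope classical_set_scope.
Local Open Scope ring_scope.

Section Defs.
Variable R : realType.

Definition lpnorm (p : R) (Z : finType) (f : Z -> R) : R :=
  (\sum_(z : Z) `|f z| `^ p) `^ p^-1.

Definition onehot (Z : finType) (z : Z) : Z -> R :=
  fun z' => if z' == z then 1 else 0.

Definition concat (Y A : finType) (f : Y -> R) (g : A -> R) : (Y + A)%type -> R :=
  fun s => match s with inl u => f u | inr v => g v end.

Definition pair_dist (p : R) (Y A : finType) (z z' : (Y * A)%type) : R :=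
  lpnorm p (concat (fun u => onehot z.1 u - onehot z'.1 u)
                   (fun v => onehot z.2 v - onehot z'.2 v)).

Definition coupling (Z : finType) (mu nu : Z -> R) (pi : Z -> Z -> R) : Prop :=
  [/\ forall z z', 0 <= pi z z',
      forall z, \sum_(z' : Z) pi z z' = mu z &
      forall z', \sum_(z : Z) pi z z' = nu z'].

Definition W1 (Z : finType) (dist : Z -> Z -> R) (mu nu : Z -> R) : R :=
  inf [set c | exists pi, coupling mu nu pi /\
               c = \sum_(z : Z) \sum_(z' : Z) pi z z' * dist z z'].

Variables (d : measure_display) (T : measurableType d) (P : probability T R).

Definition law (Y : finType) (U : T -> Y) (y : Y) : R := fine (P (U @^-1` [set y])).
Definition joint_law (Y A : finType) (U : T -> Y) (V : T -> A) (z : (Y * A)%type) : R :=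
  fine (P (U @^-1` [set z.1] `&` V @^-1` [set z.2])).

Definition IW (p : R) (Y A : finType) (U : T -> Y) (V : T -> A) : R :=
  W1 (@pair_dist p Y A) (joint_law U V) (fun z => law U z.1 * law V z.2).

End Defs.

(* Main.v *)
Require Import Defs.
From HB Require Import structures.
From mathcomp Require Import all_boot all_order all_algebra.
From mathcomp Require Import all_classical all_reals all_analysis.
From mathcomp Require Import lra.
Import Order.TTheory GRing.Theory Num.Theory.
Local Open Scope classical_set_scope.
Local Open Scope ring_scope.



Section Glue.
Variables (R : realType) (Z : finType) (d : Z -> Z -> R).

Definition cost (pi : Z -> Z -> R) := \sum_(z : Z) \sum_(z' : Z) pi z z' * d z z'.

Lemma coupling_l0 (mu nu : Z -> R) (pi : Z -> Z -> R) x y : coupling mu nu pi -> mu x = 0 -> pi x y = 0.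
Proof.
case=> h0 hr _ hm.
have /psumr_eq0P H : \sum_(z' : Z) pi x z' = 0 by rewrite hr.
by apply: H => // z _.
Qed.

Lemma coupling_r0 (mu nu : Z -> R) (pi : Z -> Z -> R) x y : coupling mu nu pi -> nu y = 0 -> pi x y = 0.
Proof.
case=> h0 _ hc hm.
have /psumr_eq0P H : \sum_(z : Z) pi z y = 0 by rewrite hc.
by apply: H => // z _.
Qed.

Lemma coupling_l_ge0 (mu nu : Z -> R) (pi : Z -> Z -> R) x : coupling mu nu pi -> 0 <= mu x.
Proof. by case=> h0 hr _; rewrite -hr sumr_ge0. Qed.

Lemma coupling_r_ge0 (mu nu : Z -> R) (pi : Z -> Z -> R) x : coupling mu nu pi -> 0 <= nu x.
Proof. by case=> h0 _ hc; rewrite -hc sumr_ge0. Qed.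

Variables (mu1 mu2 nu2 nu1 : Z -> R) (sig pi tau : Z -> Z -> R).
Hypotheses (hs : coupling mu1 mu2 sig) (hp : coupling mu2 nu2 pi)
  (ht : coupling nu2 nu1 tau).

Let K x2 x := sig x x2 / mu2 x2.
Let M z2 z := tau z2 z / nu2 z2.

Let K_ge0 x2 x : 0 <= K x2 x.
Proof.
by rewrite /K divr_ge0 //; [case: hs | exact: (@coupling_r_ge0 _ _ _ _ hs)].
Qed.

Let M_ge0 z2 z : 0 <= M z2 z.
Proof.
by rewrite /M divr_ge0 //; [case: ht | exact: (@coupling_l_ge0 _ _ _ _ ht)].
Qed.

Let sigK x x2 : sig x x2 = K x2 x * mu2 x2.
Proof.
rewrite /K; have [e|nz] := eqVneq (mu2 x2) 0.
  by rewrite e mulr0 (@coupling_r0 _ _ _ _ _ hs e).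
by rewrite divfK.
Qed.

Let tauM z2 z : tau z2 z = nu2 z2 * M z2 z.
Proof.
rewrite /M; have [e|nz] := eqVneq (nu2 z2) 0.
  by rewrite e mul0r (@coupling_l0 _ _ _ _ _ ht e).
by rewrite mulrC divfK.
Qed.

Let piK x2 z2 : pi x2 z2 * (\sum_x K x2 x) = pi x2 z2.
Proof.
rewrite /K -mulr_suml.
have [e|nz] := eqVneq (mu2 x2) 0.
  by rewrite (@coupling_l0 _ _ _ _ _ hp e) mul0r.
case: hs => _ _ ->; by rewrite divff // mulr1.
Qed.

Let piM x2 z2 : pi x2 z2 * (\sum_z M z2 z) = pi x2 z2.
Proof.
rewrite /M -mulr_suml.
have [e|nz] := eqVneq (nu2 z2) 0.
  by rewrite (@coupling_r0 _ _ _ _ _ hp e) mul0r.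
case: ht => _ -> _; by rewrite divff // mulr1.
Qed.

Definition glued x z := \sum_x2 \sum_z2 K x2 x * pi x2 z2 * M z2 z.

Lemma glued_coupling : coupling mu1 nu1 glued.
Proof.
split.
- move=> x z; apply: sumr_ge0 => x2 _; apply: sumr_ge0 => z2 _.
  rewrite mulr_ge0 ?M_ge0 // mulr_ge0 ?K_ge0 //; by case: hp.
- move=> x; rewrite /glued exchange_big /=.
  transitivity (\sum_x2 sig x x2); last by case: hs.
  apply: eq_bigr => x2 _.
  transitivity (\sum_z2 K x2 x * pi x2 z2).
    rewrite exchange_big /=; apply: eq_bigr => z2 _.
    by rewrite -mulr_sumr -mulrA piM.
  by rewrite -mulr_sumr; case: hp => _ -> _; rewrite sigK.
- move=> z; rewrite /glued.
  transitivity (\sum_x2 \sum_z2 pi x2 z2 * M z2 z).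
    rewrite exchange_big /=; apply: eq_bigr => x2 _; rewrite exchange_big /=.
    apply: eq_bigr => z2 _.
    rewrite -!mulr_suml; by move: (piK x2 z2); rewrite /K -mulr_suml mulrC => ->.
  rewrite exchange_big /=; case: ht => _ _ <-; apply: eq_bigr => z2 _.
  rewrite tauM -mulr_suml; by case: hp => _ _ ->.
Qed.

Lemma swap4 (F : Z -> Z -> Z -> Z -> R) :
  \sum_a \sum_b \sum_c \sum_e F a b c e = \sum_c \sum_e \sum_a \sum_b F a b c e.
Proof.
under eq_bigr do rewrite exchange_big /=.
rewrite exchange_big /=.
apply: eq_bigr => c _.
under eq_bigr do rewrite exchange_big /=.
by rewrite exchange_big.
Qed.

Lemma glued_cost (dtri : forall x y z, d x z <= d x y + d y z) :
  cost glued <= cost sig + cost pi + cost tau.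
Proof.
clearbody K M.
have E1 : \sum_x \sum_z \sum_x2 \sum_z2 K x2 x * pi x2 z2 * M z2 z * d x x2
   = cost sig.
  apply: eq_bigr => x _; rewrite exchange_big /=; apply: eq_bigr => x2 _.
  rewrite exchange_big /=.
  under eq_bigr => z2 _ do rewrite -mulr_suml -mulr_sumr -(mulrA (K x2 x)) piM.
  rewrite -mulr_suml -mulr_sumr; case: hp => _ -> _; by rewrite -sigK.
have E2 : \sum_x \sum_z \sum_x2 \sum_z2 K x2 x * pi x2 z2 * M z2 z * d x2 z2
   = cost pi.
  rewrite swap4; apply: eq_bigr => x2 _; apply: eq_bigr => z2 _.
  under eq_bigr => x _ do rewrite -mulr_suml -mulr_sumr -(mulrA (K x2 x)) piM.
  by rewrite -!mulr_suml [(\sum_x K x2 x) * _]mulrC piK.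
have E3 : \sum_x \sum_z \sum_x2 \sum_z2 K x2 x * pi x2 z2 * M z2 z * d z2 z
   = cost tau.
  rewrite swap4.
  transitivity (\sum_x2 \sum_z2 \sum_z pi x2 z2 * (M z2 z * d z2 z)).
    apply: eq_bigr => x2 _; apply: eq_bigr => z2 _.
    rewrite exchange_big /=; apply: eq_bigr => z _.
    by rewrite -!mulr_suml [(\sum_x K x2 x) * _]mulrC piK -mulrA.
  rewrite exchange_big /=; apply: eq_bigr => z2 _; rewrite exchange_big /=.
  apply: eq_bigr => z _.
  rewrite -mulr_suml; case: hp => _ _ ->; by rewrite mulrA -tauM.
rewrite -E1 -E2 -E3 /cost -!big_split /=; apply: ler_sum => x _.
rewrite -!big_split /=; apply: ler_sum => z _.
rewrite /glued mulr_suml -!big_split /=; apply: ler_sum => x2 _.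
rewrite mulr_suml -!big_split /=; apply: ler_sum => z2 _.
rewrite -!mulrDr; apply: ler_wpM2l.
  by rewrite mulr_ge0 ?M_ge0 // mulr_ge0 ?K_ge0 //; case: hp.
rewrite -addrA; apply: (le_trans (dtri x x2 z)); rewrite lerD2l; exact: dtri.
Qed.
End Glue.

Arguments glued_coupling {R Z mu1 mu2 nu2 nu1 sig pi tau}.
Arguments glued_cost {R Z} d {mu1 mu2 nu2 nu1 sig pi tau}.
Arguments cost {R Z}.

Lemma cost_ge0 (R : realType) (Z : finType) (d : Z -> Z -> R) (mu nu : Z -> R) pi :
  (forall x y, 0 <= d x y) -> coupling mu nu pi -> 0 <= cost d pi.
Proof.
move=> d0 [h0 _ _]; apply: sumr_ge0 => x _; apply: sumr_ge0 => y _.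
exact: mulr_ge0.
Qed.

Lemma W1_tri (R : realType) (Z : finType) (d : Z -> Z -> R)
  (mu1 mu2 nu2 nu1 : Z -> R) (sig tau : Z -> Z -> R) :
  (forall x y, 0 <= d x y) -> (forall x y z, d x z <= d x y + d y z) ->
  coupling mu1 mu2 sig -> coupling nu2 nu1 tau ->
  (exists pi0, coupling mu2 nu2 pi0) ->
  W1 d mu1 nu1 <= W1 d mu2 nu2 + (cost d sig + cost d tau).
Proof.
move=> d0 dtri hs ht [pi0 hp0].
have lb1 : has_lbound [set c | exists pi, coupling mu1 nu1 pi /\
               c = \sum_(z : Z) \sum_(z' : Z) pi z z' * d z z'].
  exists 0 => c [pi [hpi ->]]; exact: (@cost_ge0 _ _ _ _ _ _ d0 hpi).
rewrite /W1 -lerBlDr; apply: lb_le_inf.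
  by exists (cost d pi0), pi0.
move=> c [pi [hp ->]]; rewrite lerBlDr.
have S1g : [set c | exists pi, coupling mu1 nu1 pi /\
               c = \sum_(z : Z) \sum_(z' : Z) pi z z' * d z z'] (cost d (glued R Z mu2 nu2 sig pi tau)).
  by exists (glued R Z mu2 nu2 sig pi tau); split => //; exact: glued_coupling.
apply: (le_trans (ge_inf lb1 S1g)).
apply: (le_trans (glued_cost d hs hp ht dtri)).
rewrite -/(cost d pi) addrCA addrA; exact: le_refl.
Qed.

Section Dist.
Variable R : realType.
Definition hd (b : bool) : R := if b then 2 else 0.

Lemma hd_ge0 b : 0 <= hd b.
Proof. by case: b; rewrite /hd //=; lra. Qed.

Lemma hd_tri (Y : eqType) (x y z : Y) : hd (x != z) <= hd (x != y) + hd (y != z).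
Proof.
have [->|nxy] := eqVneq x y; first by rewrite /= /hd add0r.
rewrite /hd; case: (x != z); case: (y != z); lra.
Qed.

Lemma sum_onehot (p : R) (hp : 0 < p) (Y : finType) (y y' : Y) :
  \sum_u `|@onehot R Y y u - @onehot R Y y' u| `^ p = hd (y != y').
Proof.
have z0 : (0 : R) `^ p = 0 by rewrite powR0 // gt_eqF.
have [<-|ne] := eqVneq y y'.
  by rewrite big1 // => u _; rewrite subrr normr0.
rewrite (bigD1 y) //= (bigD1 y') /=; last by rewrite eq_sym.
rewrite big1; last first.
  move=> u /andP [uy' uy]; rewrite /onehot (negbTE uy) (negbTE uy').
  by rewrite subrr normr0.
rewrite /onehot eqxx (negbTE ne) eq_sym (negbTE ne) eqxx.
rewrite subr0 sub0r normrN normr1 powR1 /hd; lra.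
Qed.

Lemma pair_dist_E (p : R) (hp : 0 < p) (Y A : finType) (z z' : Y * A) :
  pair_dist p z z' = (hd (z.1 != z'.1) + hd (z.2 != z'.2)) `^ p^-1.
Proof.
by rewrite /pair_dist /lpnorm big_sumType /= !sum_onehot.
Qed.

Lemma le_powR_id (a q : R) : 0 <= a <= 1 -> q <= 1 -> a <= a `^ q.
Proof.
case/andP => a0 a1 q1; have [->|an0] := eqVneq a 0; first exact: powR_ge0.
by apply: ger1_powR => //; rewrite a1 andbT lt0r an0.
Qed.

Lemma powR_subadd (q s t : R) : 0 < q <= 1 -> 0 <= s -> 0 <= t ->
  (s + t) `^ q <= s `^ q + t `^ q.
Proof.
case/andP => q0 q1 s0 t0.
have [st0|stpos] : s + t = 0 \/ 0 < s + t.
  by case: (ltgtP 0 (s + t)) => h; [right|lra|left].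
  have s00 : s = 0 by lra.
  have t00 : t = 0 by lra.
  by rewrite s00 t00 addr0 powR0 ?gt_eqF // addr0.
set u := s + t.
have uq0 : 0 <= u `^ q by exact: powR_ge0.
have key : forall a, 0 <= a <= u -> a / u * u `^ q <= a `^ q.
  move=> a /andP [a0 au].
  have -> : a `^ q = (a / u) `^ q * u `^ q.
    have u0 : 0 <= u by exact: ltW.
    have au0 : 0 <= a / u by exact: divr_ge0.
    by rewrite -powRM ?divfK ?gt_eqF.
  apply: ler_wpM2r => //; apply: le_powR_id => //.
  apply/andP; split; first exact: divr_ge0 a0 (ltW stpos).
  by rewrite ler_pdivrMr // mul1r.
apply: (@le_trans _ _ (s / u * u `^ q + t / u * u `^ q)).
  by rewrite -mulrDl -mulrDl divff ?gt_eqF // mul1r.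
apply: lerD; apply: key; rewrite /u; apply/andP; split => //; lra.
Qed.

Lemma pair_dist_ge0 (p : R) (Y A : finType) (z z' : Y * A) : 0 <= pair_dist p z z'.
Proof. exact: powR_ge0. Qed.

Lemma pair_dist_tri (p : R) (hp : 1 <= p) (Y A : finType) (x y z : Y * A) :
  pair_dist p x z <= pair_dist p x y + pair_dist p y z.
Proof.
have p0 : 0 < p by lra.
have q0 : 0 < p^-1 by rewrite invr_gt0.
have q1 : p^-1 <= 1 by rewrite invr_le1 // unitfE gt_eqF.
rewrite !pair_dist_E //.
apply: (@le_trans _ _ ((hd (x.1 != y.1) + hd (x.2 != y.2) +
   (hd (y.1 != z.1) + hd (y.2 != z.2))) `^ p^-1)).
  apply: ge0_ler_powR; rewrite ?nnegrE ?addr_ge0 ?hd_ge0 //; first exact: ltW.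
  rewrite addrACA; apply: lerD; exact: hd_tri.
by apply: powR_subadd; rewrite ?q0 ?q1 ?addr_ge0 ?hd_ge0.
Qed.
End Dist.


Section Meas.
Variables (R : realType) (d : measure_display) (T : measurableType d)
  (P : probability T R).

Lemma part_seq (S : set T) (mS : measurable S) (Aa : finType) (V : T -> Aa)
  (mV : forall a, measurable (V @^-1` [set a])) (s : seq Aa) : uniq s ->
  measurable (S `&` [set w | V w \in s]) /\
  P (S `&` [set w | V w \in s]) = (\sum_(a <- s) P (S `&` V @^-1` [set a]))%E.
Proof.
elim: s => [|a s IH] /=.
  have -> : S `&` [set w | V w \in [::]] = set0.
    by apply/seteqP; split => w //= [_]; rewrite in_nil.
  by split; [exact: measurable0 | rewrite measure0 big_nil].
case/andP => ans us; have [m1 e1] := IH us.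
have eq : S `&` [set w | V w \in a :: s] =
    (S `&` V @^-1` [set a]) `|` (S `&` [set w | V w \in s]).
  apply/seteqP; split => w /=.
    by case=> Sw; rewrite in_cons => /orP [/eqP ->|ins]; [left|right].
  by case => [[Sw ->]|[Sw ins]]; split => //; rewrite in_cons ?eqxx ?ins ?orbT.
rewrite eq; split; first by apply: measurableU => //; exact: measurableI.
rewrite measureU //; first by rewrite big_cons; congr (_ + _)%E; exact: e1.
  exact: measurableI.
apply/seteqP; split => w //= [[_ Vwa] [_ Vws]]; move: Vws.
by rewrite Vwa (negbTE ans).
Qed.

Lemma part (S : set T) (mS : measurable S) (Aa : finType) (V : T -> Aa)
  (mV : forall a, measurable (V @^-1` [set a])) :
  fine (P S) = \sum_a fine (P (S `&` V @^-1` [set a])).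
Proof.
have [_ e] := @part_seq S mS Aa V mV _ (index_enum_uniq Aa).
have eS : S `&` [set w | V w \in index_enum Aa] = S.
  by apply/seteqP; split => w /=; [case | move=> Sw; split => //; rewrite mem_index_enum].
rewrite eS in e; rewrite e -sum_fine //.
move=> a _; apply: fin_num_measure; exact: measurableI.
Qed.

Lemma meas_fiber (Aa : finType) (V : T -> Aa)
  (mV : forall a, measurable (V @^-1` [set a])) (G : Aa -> set T)
  (mG : forall a, measurable (G a)) : measurable [set w | G (V w) w].
Proof.
suff H : forall s : seq Aa, measurable [set w | V w \in s /\ G (V w) w].
  have -> : [set w | G (V w) w] = [set w | V w \in index_enum Aa /\ G (V w) w].
    by apply/seteqP; split => w /=; [move=> h; split => //; rewrite mem_index_enum | case].
  exact: H.
elim=> [|a s IH].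
  have -> : [set w | V w \in [::] /\ G (V w) w] = set0.
    by apply/seteqP; split => w //= [].
  exact: measurable0.
have -> : [set w | V w \in a :: s /\ G (V w) w] =
   (V @^-1` [set a] `&` G a) `|` [set w | V w \in s /\ G (V w) w].
  apply/seteqP; split => w /=.
    by case; rewrite in_cons => /orP [/eqP ->|ins] h; [left|right].
  by case => [[-> h]|[ins h]]; split => //; rewrite in_cons ?eqxx ?ins ?orbT.
by apply: measurableU => //; apply: measurableI.
Qed.

Lemma fine_P_ge0 (S : set T) : 0 <= fine (P S).
Proof. by apply: fine_ge0; apply: measure_ge0. Qed.

End Meas.
Lemma sum_pair (R : realType) (I J : finType) (F : I * J -> R) :
  \sum_z F z = \sum_i \sum_j F (i, j).
Proof. by rewrite pair_bigA; apply: eq_bigr => -[]. Qed.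

Lemma prod_coupling (R : realType) (Z : finType) (mu nu : Z -> R) :
  (forall x, 0 <= mu x) -> (forall x, 0 <= nu x) ->
  \sum_x mu x = 1 -> \sum_x nu x = 1 ->
  coupling mu nu (fun x y => mu x * nu y).
Proof.
move=> m0 n0 m1 n1; split.
- by move=> x y; apply: mulr_ge0.
- by move=> x; rewrite -mulr_sumr n1 mulr1.
- by move=> y; rewrite -mulr_suml m1 mul1r.
Qed.

Section Main.
Variables (R : realType) (d : measure_display) (T : measurableType d)
  (P : probability T R) (Ys As : finType) (p : R) (hp : 1 <= p)
  (Yh : T -> Ys) (A Ah : T -> As)
  (mYh : forall y, measurable (Yh @^-1` [set y]))
  (mA : forall a, measurable (A @^-1` [set a]))
  (mAh : forall a, measurable (Ah @^-1` [set a])).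

Let q y a a2 := fine (P (Yh @^-1` [set y] `&` A @^-1` [set a] `&` Ah @^-1` [set a2])).
Let r a a2 := fine (P (A @^-1` [set a] `&` Ah @^-1` [set a2])).
Let L y := law P Yh y.
Let LA a := law P A a.
Let LAh a := law P Ah a.

Let F1 y a : \sum_a2 q y a a2 = joint_law P Yh A (y, a).
Proof. by rewrite /joint_law /= (@part _ _ _ P _ _ _ Ah mAh); last exact: measurableI. Qed.

Let F2 y a2 : \sum_a q y a a2 = joint_law P Yh Ah (y, a2).
Proof.
rewrite /joint_law /= (@part _ _ _ P _ _ _ A mA); last exact: measurableI.
by apply: eq_bigr => a _; rewrite /q setIAC.
Qed.

Let F3 b2 : \sum_b r b b2 = LAh b2.
Proof.
rewrite /LAh /law (@part _ _ _ P _ (mAh b2) _ A mA).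
by apply: eq_bigr => b _; rewrite /r setIC.
Qed.

Let F4 b : \sum_b2 r b b2 = LA b.
Proof. by rewrite /LA /law (@part _ _ _ P _ (mA b) _ Ah mAh). Qed.

Let F5 a a2 : \sum_y q y a a2 = r a a2.
Proof.
rewrite /r (@part _ _ _ P _ _ _ Yh mYh); last exact: measurableI.
by apply: eq_bigr => y _; rewrite /q [in RHS]setIC setIA.
Qed.

Let F6 (Aa : finType) (V : T -> Aa) (mV : forall a, measurable (V @^-1` [set a])) :
  \sum_a law P V a = 1.
Proof.
have := @part _ _ _ P _ measurableT _ V mV.
rewrite probability_setT /= => ->.
by apply: eq_bigr => a _; rewrite setTI.
Qed.

Let F7 y : \sum_a joint_law P Yh Ah (y, a) = L y.
Proof. by rewrite /L /law (@part _ _ _ P _ (mYh y) _ Ah mAh). Qed.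

Let E := [set w | A w <> Ah w].

Let mE : measurable E.
Proof.
have h := @meas_fiber d T As A mA (fun a => ~` (Ah @^-1` [set a]))
  (fun a => measurableC (mAh a)).
suff -> : E = [set w | (~` (Ah @^-1` [set A w])) w] by [].
by apply/seteqP; split => w /= hw /esym.
Qed.

Let F8 : fine (P E) = \sum_b \sum_b2 (if b != b2 then r b b2 else 0).
Proof.
rewrite (@part _ _ _ P _ mE _ A mA); apply: eq_bigr => b _.
rewrite (@part _ _ _ P _ _ _ Ah mAh); last exact: measurableI.
apply: eq_bigr => b2 _.
have [->|nb] := eqVneq b b2 => /=.
  have -> : E `&` A @^-1` [set b2] `&` Ah @^-1` [set b2] = set0.
    by apply/seteqP; split => // w [[/= Ew Aw] Ahw]; apply: Ew; rewrite Aw Ahw.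
  by rewrite measure0.
congr (fine (P _)); apply/seteqP; split => w /=; first by case=> -[].
by case=> Aw Ahw; split => //; split => //; rewrite /E /= Aw Ahw => e; move: nb; rewrite e eqxx.
Qed.


Let p0 : 0 < p.
Proof. exact: (lt_le_trans ltr01 hp). Qed.

Let c := (2 : R) `^ p^-1.

Let pdE (y : Ys) (a a2 : As) : pair_dist p (y, a) (y, a2) = if a != a2 then c else 0.
Proof.
rewrite (@pair_dist_E R p p0) /= eqxx /hd add0r.
case: (a != a2) => //; rewrite powR0 // invr_neq0 // gt_eqF //.
Qed.

Let sig (x x2 : Ys * As) := if x.1 == x2.1 then q x.1 x.2 x2.2 else 0.
Let tau (z2 z : Ys * As) := if z2.1 == z.1 then L z.1 * r z.2 z2.2 else 0.

Let hsig : coupling (joint_law P Yh A) (joint_law P Yh Ah) sig.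
Proof.
split.
- move=> x x2; rewrite /sig; case: ifP => _ //; exact: fine_P_ge0.
- move=> [y a]; rewrite sum_pair (bigD1 y) //= [X in _ + X]big1 ?addr0.
    by rewrite -F1; apply: eq_bigr => a2 _; rewrite /sig /= eqxx.
  move=> y2 ny2; apply: big1 => a2 _; by rewrite /sig /= eq_sym (negbTE ny2).
- move=> [y2 a2]; rewrite sum_pair (bigD1 y2) //= [X in _ + X]big1 ?addr0.
    by rewrite -F2; apply: eq_bigr => a _; rewrite /sig /= eqxx.
  move=> y ny; apply: big1 => a _; by rewrite /sig /= (negbTE ny).
Qed.

Let htau : coupling (fun z => L z.1 * LAh z.2) (fun z => L z.1 * LA z.2) tau.
Proof.
split.
- move=> x x2; rewrite /tau; case: ifP => _ //.
  by apply: mulr_ge0; exact: fine_P_ge0.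
- move=> [y2 b2]; rewrite sum_pair (bigD1 y2) //= [X in _ + X]big1 ?addr0.
    by rewrite -F3 mulr_sumr; apply: eq_bigr => b _; rewrite /tau /= eqxx.
  move=> y ny; apply: big1 => b _; by rewrite /tau /= eq_sym (negbTE ny).
- move=> [y b]; rewrite sum_pair (bigD1 y) //= [X in _ + X]big1 ?addr0.
    by rewrite -F4 mulr_sumr; apply: eq_bigr => b2 _; rewrite /tau /= eqxx.
  move=> y2 ny2; apply: big1 => b2 _; by rewrite /tau /= (negbTE ny2).
Qed.

Let hex : exists pi0, coupling (joint_law P Yh Ah) (fun z => L z.1 * LAh z.2) pi0.
Proof.
exists (fun x y => joint_law P Yh Ah x * (L y.1 * LAh y.2)); apply: prod_coupling.
- move=> x; exact: fine_P_ge0.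
- by move=> x; apply: mulr_ge0; exact: fine_P_ge0.
- rewrite sum_pair; under eq_bigr do rewrite F7.
  exact: (@F6 _ _ mYh).
- rewrite sum_pair /=; under eq_bigr do rewrite -mulr_sumr (@F6 _ _ mAh) mulr1.
  exact: (@F6 _ _ mYh).
Qed.

Let cost_sig : cost (@pair_dist R p Ys As) sig = c * fine (P E).
Proof.
transitivity (\sum_y \sum_a \sum_a2 q y a a2 * (if a != a2 then c else 0)).
  rewrite /cost sum_pair; apply: eq_bigr => y _; apply: eq_bigr => a _.
  rewrite sum_pair (bigD1 y) //= [X in _ + X]big1 ?addr0.
    by apply: eq_bigr => a2 _; rewrite /sig /= eqxx pdE.
  move=> y2 ny2; apply: big1 => a2 _; by rewrite /sig /= eq_sym (negbTE ny2) mul0r.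
rewrite F8 exchange_big /= mulr_sumr; apply: eq_bigr => a _.
rewrite exchange_big /= mulr_sumr; apply: eq_bigr => a2 _.
rewrite -mulr_suml F5; case: (a != a2); [exact: mulrC | by rewrite !mulr0].
Qed.

Let cost_tau : cost (@pair_dist R p Ys As) tau = c * fine (P E).
Proof.
transitivity (\sum_y2 \sum_b2 \sum_b L y2 * r b b2 * (if b != b2 then c else 0)).
  rewrite /cost sum_pair; apply: eq_bigr => y2 _; apply: eq_bigr => b2 _.
  rewrite sum_pair (bigD1 y2) //= [X in _ + X]big1 ?addr0.
    by apply: eq_bigr => b _; rewrite /tau /= eqxx pdE (eq_sym b2 b).
  move=> y ny; apply: big1 => b _; by rewrite /tau /= eq_sym (negbTE ny) mul0r.
have inner : forall y2, \sum_b2 \sum_b L y2 * r b b2 * (if b != b2 then c else 0)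
   = L y2 * (c * fine (P E)).
  move=> y2; rewrite F8 exchange_big /= !mulr_sumr; apply: eq_bigr => b _.
  rewrite !mulr_sumr; apply: eq_bigr => b2 _.
  case: (b != b2); last by rewrite !mulr0.
  by rewrite -mulrA [r b b2 * c]mulrC mulrA.
rewrite (eq_bigr _ (fun y2 _ => inner y2)) -mulr_suml (@F6 _ _ mYh) mul1r.
by [].
Qed.

Lemma main' : IW P p Yh A <= IW P p Yh Ah + 2 * 2 `^ p^-1 * fine (P [set w | A w <> Ah w]).
Proof.
have h := @W1_tri R _ (@pair_dist R p Ys As) _ _ _ _ sig tau (@pair_dist_ge0 R p _ _)
  (@pair_dist_tri R p hp _ _) hsig htau hex.
rewrite /IW; apply: (le_trans h).
by rewrite cost_sig cost_tau -mulrA mulr_natl mulr2n.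
Qed.
End Main.

Theorem lemma2 (R : realType) (d : measure_display) (T : measurableType d)
  (P : probability T R) (Ys As : finType) (p : R) (hp : 1 <= p)
  (Yh : T -> Ys) (A Ah : T -> As)
  (mYh : forall y, measurable (Yh @^-1` [set y]))
  (mA : forall a, measurable (A @^-1` [set a]))
  (mAh : forall a, measurable (Ah @^-1` [set a])) :
  IW P p Yh A <= IW P p Yh Ah + 2 * 2 `^ p^-1 * fine (P [set w | A w <> Ah w]).
Proof.
exact: (@main' R d T P Ys As p hp Yh A Ah mYh mA mAh).
Qed.
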